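(* Let $\mathcal G=(G,\pi_G,c_G)$ and $\mathcal H=(H,\pi_H,c_H)$ be in $\mathrm{LiftPMod}(\mathbb B,\mathcal C)$, and let $\varphi:\mathcal G\to\mathcal H$ be a morphism of lifted perceptrons. Then for all $w_G\in\mathrm{Param}(\mathcal G)$ and $w_H\in\mathrm{Param}(\mathcal H)$, if $w_G=\varphi^*w_H$ (i.e. $(w_G)_e=(w_H)_{\varphi(e)}$ for all $e\in E_G$), then $\mathcal F_{\mathcal G}(w_G,\cdot)=\varphi^*\circ\mathcal F_{\mathcal H}(w_H,\cdot)$, i.e. $[\mathcal F_{\mathcal G}(w_G,x)]_v=[\mathcal F_{\mathcal H}(w_H,x)]_{\varphi(v)}$ for every input $x\in\prod_{u\in\mathcal C}\mathcal Y_{p_{\mathcal C}(u)}$ and every $v\in V_G$.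
   Context: Graphs: $G=(V,E)$, $V$ finite, $E\subseteq V\times V$; $G(-,v)=\{u:(u,v)\in E\}$. A homomorphism $\varphi:G\to H$ maps vertices with $(u,v)\in E_G\Rightarrow(\varphi(u),\varphi(v))\in E_H$, and acts on edges by $\varphi(u,v)=(\varphi(u),\varphi(v))$. A fibration is a homomorphism such that for each $v\in V_G$ the restriction $G(-,v)\to H(-,\varphi(v))$ is a bijection. A Euclidean bundle over a finite set is a family of finite-dimensional real inner product spaces indexed by it. A perceptron module over a finite DAG $B=(V_B,E_B)$ is $\mathbb B=((I_B,T_B),(\mathcal Y,\mathcal Z,\mathcal W),(M,\sigma))$: $I_B\subseteq V_B$ (vertices without parents), $T_B\subseteq V_B$, bundles $\mathcal Y$ over $V_B$, $\mathcal Z,\mathcal W$ over $E_B$, maps $M_{(u,v)}:\mathcal W_{(u,v)}\times\mathcal Y_u\to\mathcal Z_{(u,v)}$ and $\sigma_v:\prod_{u\in B(-,v)}\mathcal Z_{(u,v)}\to\mathcal Y_v$ for $v\notin I_B$. Fix such $\mathbb B$, a finite set $\mathcal C$ and $p_{\mathcal C}:\mathcal C\to I_B$. $\mathrm{LiftPMod}(\mathbb B,\mathcal C)$: triples $(G,\pi,c)$ with $G=(V_G,E_G)$ a graph, $\pi:G\to B$ a homomorphism, $c:\pi^{-1}(I_B)\to\mathcal C$ injective with $p_{\mathcal C}\circ c=\pi$ on $\pi^{-1}(I_B)$. $\mathrm{Param}(\mathcal G)=\prod_{e\in E_G}\mathcal W_{\pi(e)}$. Forward function: $\mathcal F_{\mathcal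 G}(w,x)=f\in\prod_{v\in V_G}\mathcal Y_{\pi(v)}$ with $f_v=x_{c(v)}$ if $\pi(v)\in I_B$, and otherwise $f_v=\sigma_{\pi(v)}((\sum_{u\in G(-,v)\cap\pi^{-1}(a)}M_{\pi(u,v)}(w_{(u,v)},f_u))_{a\in B(-,\pi(v))})$, defined inductively (G is acyclic). A morphism of lifted perceptrons $\varphi:(G,\pi_G,c_G)\to(H,\pi_H,c_H)$ is a fibration $\varphi:G\to H$ with $\pi_G=\pi_H\circ\varphi$ and $c_G=c_H\circ\varphi$ (on input vertices). *)

(* Defs.v *)
From HB Require Import structures.
From mathcomp Require Import all_boot all_order all_algebra.
From mathcomp Require Import reals.
Set Implicit Arguments. Unset Strict Implicit. Unset Printing Implicit Defensive.
Import GRing.Theory.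
Local Open Scope ring_scope.

(* Euclidean bundles: a finite-dimensional real inner product space is
   represented (up to isometry) by 'rV[R]_d; a bundle is a dimension function.
   Bundles over edges are indexed by all vertex pairs; only values on edges
   are ever used. *)

Definition acyclic (V : finType) (E : rel V) : Prop :=
  forall (v : V) (p : seq V), p != [::] -> path E v p -> last v p != v.

Record PMod (R : realType) (VB : finType) := {
  pm_E : rel VB;
  pm_acyclic : acyclic pm_E;
  pm_I : {set VB};
  pm_T : {set VB};
  pm_I_noparent : forall i u, i \in pm_I -> ~~ pm_E u i;
  pm_dY : VB -> nat;
  pm_dZ : VB -> VB -> nat;
  pm_dW : VB -> VB -> nat;
  pm_M : forall a b : VB, 'rV[R]_(pm_dW a b) -> 'rV[R]_(pm_dY a) -> 'rV[R]_(pm_dZ a b);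
  (* sigma_b : prod_{a in B(-,b)} Z_(a,b) -> Y_b  (the argument is a family
     indexed by all a; in the forward function it is 0 off the parents) *)
  pm_sigma : forall b : VB, (forall a : VB, 'rV[R]_(pm_dZ a b)) -> 'rV[R]_(pm_dY b);
}.

(* Element (G, pi, c) of LiftPMod(B, C); c is a total function whose values
   matter only on pi^{-1}(I_B). *)
Record LiftPMod (R : realType) (VB : finType) (B : PMod R VB)
    (C : finType) (pC : C -> VB) := {
  lp_V : finType;
  lp_E : rel lp_V;
  lp_pi : lp_V -> VB;
  lp_c : lp_V -> C;
  lp_hom : forall u v, lp_E u v -> pm_E B (lp_pi u) (lp_pi v);
  lp_c_inj : forall u v, lp_pi u \in pm_I B -> lp_pi v \in pm_I B ->
               lp_c u = lp_c v -> u = v;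
  lp_c_compat : forall v, lp_pi v \in pm_I B -> pC (lp_c v) = lp_pi v;
}.

Arguments lp_E {R VB B C pC} l _ _.
Arguments lp_pi {R VB B C pC} l _.
Arguments lp_c {R VB B C pC} l _.

Section Forward.
Variables (R : realType) (VB : finType) (B : PMod R VB) (C : finType) (pC : C -> VB).
Variable G : LiftPMod B pC.

(* Param(G) = prod_{e in E_G} W_{pi(e)} (values off edges are irrelevant) *)
Definition Param := forall u v : lp_V G, 'rV[R]_(pm_dW B (lp_pi G u) (lp_pi G v)).
Definition Input := forall i : C, 'rV[R]_(pm_dY B (pC i)).
Definition Output := forall v : lp_V G, 'rV[R]_(pm_dY B (lp_pi G v)).

(* conform_mx 0 A is the identity cast when the dimensions agree (which they
   do at every use below, by the compatibility conditions). *)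
Definition fwd_step (w : Param) (x : Input) (f : Output) : Output :=
  fun v =>
    if lp_pi G v \in pm_I B then conform_mx 0 (x (lp_c G v))
    else pm_sigma (fun a : VB =>
           \sum_(u | lp_E G u v && (lp_pi G u == a))
              conform_mx 0 (pm_M (w u v) (f u))).

(* The inductive (well-founded, G being acyclic) definition of the forward
   function, realized as #|V_G| iterations of the defining equations
   (longest paths in G have fewer than #|V_G| edges). *)
Definition forward (w : Param) (x : Input) : Output :=
  iter #|lp_V G| (fwd_step w x) (fun v => 0).

End Forward.

Record LPMorph (R : realType) (VB : finType) (B : PMod R VB)
    (C : finType) (pC : C -> VB) (G H : LiftPMod B pC) := {
  lm_map :> lp_V G -> lp_V H;
  lm_hom : forall u v, lp_E G u v -> lp_E H (lm_map u) (lm_map v);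
  lm_fib_inj : forall v u1 u2, lp_E G u1 v -> lp_E G u2 v ->
                 lm_map u1 = lm_map u2 -> u1 = u2;
  lm_fib_surj : forall v u', lp_E H u' (lm_map v) ->
                 exists2 u, lp_E G u v & lm_map u = u';
  lm_pi : forall v, lp_pi G v = lp_pi H (lm_map v);
  lm_c : forall v, lp_pi G v \in pm_I B -> lp_c G v = lp_c H (lm_map v);
}.

(* Main.v *)
Require Import Defs.
From HB Require Import structures.
From mathcomp Require Import all_boot all_order all_algebra.
From mathcomp Require Import reals.
From Stdlib Require Import FunctionalExtensionality.
Local Open Scope ring_scope.
Import GRing.Theory.

Section Conf.
Variable R : realType.

Lemma conf_conf m n p (A : 'rV[R]_m) : (m = n \/ n = p) ->
  conform_mx (0 : 'rV[R]_p) (conform_mx (0 : 'rV[R]_n) A) = conform_mx 0 A.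
Proof. by case=> e; subst; rewrite conform_mx_id. Qed.

Lemma conf0 m n : conform_mx (0 : 'rV[R]_n) (0 : 'rV[R]_m) = 0.
Proof.
case: (eqVneq m n) => [e|ne]; first by subst; rewrite conform_mx_id.
by rewrite nonconform_mx // ne orbT.
Qed.

Lemma confD m n (a b : 'rV[R]_m) :
  conform_mx (0 : 'rV[R]_n) (a + b) = conform_mx 0 a + conform_mx 0 b.
Proof.
case: (eqVneq m n) => [e|ne]; first by subst; rewrite !conform_mx_id.
by rewrite !nonconform_mx ?ne ?orbT // addr0.
Qed.

Lemma conf_sum m n (I : finType) (P : pred I) (F : I -> 'rV[R]_m) :
  conform_mx (0 : 'rV[R]_n) (\sum_(i | P i) F i) = \sum_(i | P i) conform_mx 0 (F i).
Proof. by apply: (big_morph _ (@confD m n) (@conf0 m n)). Qed.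

Lemma conf_eq_sym m n (e : m = n) (A : 'rV[R]_m) (B : 'rV[R]_n) :
  A = conform_mx 0 B -> conform_mx 0 A = B.
Proof. by subst => ->; rewrite !conform_mx_id. Qed.

End Conf.

Fixpoint reach (T : finType) (E : rel T) (k : nat) (v : T) : Prop :=
  match k with 0 => True | k.+1 => exists2 u, E u v & reach T E k u end.
Arguments reach {T} E k v.

Lemma reach_path (T : finType) (E : rel T) k v : reach E k v ->
  exists u p, [/\ size p = k, path E u p & last u p = v].
Proof.
elim: k v => [|k IH] v /=; first by exists v, [::].
case=> w ewv /IH [u [p [sp pp lp]]].
exists u, (rcons p v); split; first by rewrite size_rcons sp.
  by rewrite rcons_path pp lp.
by rewrite last_rcons.
Qed.

Lemma path_uniq (T : finType) (E : rel T) : acyclic E ->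
  forall u p, path E u p -> uniq (u :: p).
Proof.
move=> ac u p; elim: p u => [|y p IH] u //= /andP [euy hp].
have := IH _ hp; rewrite [uniq (y :: p)]/= => /andP [-> ->]; rewrite andbT.
have : path E u (y :: p) by rewrite /= euy.
move: (y :: p) => q hq.
rewrite andbT; apply/negP => H; move: hq; case/splitPr: H => s1 s2.
rewrite cat_path => /andP [h1 /= /andP [h3 _]].
have ne : rcons s1 u != [::] by case: s1 {h1 h3}.
have hp' : path E u (rcons s1 u) by rewrite rcons_path h1 h3.
by have := ac u _ ne hp'; rewrite last_rcons eqxx.
Qed.

Arguments reach_path {T E k v}.
Arguments path_uniq {T E}.

Lemma noreach (T : finType) (E : rel T) : acyclic E -> forall v, ~ reach E #|T| v.
Proof.
move=> ac v /reach_path [u [p [sp pp _]]].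
have := path_uniq ac _ _ pp => /card_uniqP.
have := max_card (mem (u :: p)).
by move=> h1 h2; move: h1; rewrite h2 /= sp ltnn.
Qed.

Arguments conf_conf {R m n p A}.

Section Main.
Variables (R : realType) (VB : finType) (B : PMod R VB) (C : finType) (pC : C -> VB).

Lemma lp_acyclic (G : LiftPMod B pC) : acyclic (lp_E G).
Proof.
move=> v p ne hp; apply/negP => /eqP e.
have hB : path (pm_E B) (lp_pi G v) (map (lp_pi G) p).
  elim: p v {ne e} hp => //= y p IH v /andP [evy hp].
  by rewrite (lp_hom evy) IH.
have ne' : map (lp_pi G) p != [::] by case: p {hp hB e} ne.
by have := pm_acyclic ne' hB; rewrite last_map e eqxx.
Qed.

Lemma stab (G : LiftPMod B pC) (w : Param G) (x : Input B pC) k v :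
  ~ reach (lp_E G) k v -> forall m, (k <= m)%N ->
  iter m (fwd_step w x) (fun _ => 0) v = iter k (fwd_step w x) (fun _ => 0) v.
Proof.
elim: k v => [|k IH] v nr m km; first by exfalso; apply: nr.
case: m km => // m km /=.
rewrite /fwd_step; case: ifP => // _; congr pm_sigma.
apply: functional_extensionality_dep => a; apply: eq_bigr => u /andP [euv _].
rewrite IH // => r; apply: nr; by exists u.
Qed.

Lemma reach_lift (G H : LiftPMod B pC) (phi : LPMorph G H) k v :
  reach (lp_E H) k (phi v) -> reach (lp_E G) k v.
Proof.
elim: k v => //= k IH v [u' e r].
have [u euv pu] := lm_fib_surj e; exists u => //; apply: IH; by rewrite pu.
Qed.

Lemma sigma_cast b1 b2 (g1 : forall a, 'rV[R]_(pm_dZ B a b1))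
    (g2 : forall a, 'rV[R]_(pm_dZ B a b2)) : b1 = b2 ->
  (forall a, g1 a = conform_mx 0 (g2 a)) -> pm_sigma g1 = conform_mx 0 (pm_sigma g2).
Proof.
move=> e; subst b2 => h; rewrite conform_mx_id; congr pm_sigma.
apply: functional_extensionality_dep => a; by rewrite h conform_mx_id.
Qed.

Lemma M_cast b1 b1' b2 b2' p (W : 'rV[R]_(pm_dW B b1' b2')) (Y : 'rV[R]_(pm_dY B b1')) :
  b1 = b1' -> b2 = b2' ->
  conform_mx (0 : 'rV[R]_p) (@pm_M _ _ B b1 b2 (conform_mx 0 W) (conform_mx 0 Y))
  = conform_mx 0 (pm_M W Y).
Proof. by move=> e1 e2; subst; rewrite !conform_mx_id. Qed.

Variables (G H : LiftPMod B pC) (phi : LPMorph G H) (wG : Param G) (wH : Param H).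
Hypothesis hw : forall u v : lp_V G, lp_E G u v -> wG u v = conform_mx 0 (wH (phi u) (phi v)).
Variable x : Input B pC.

Lemma step (fG : Output G) (fH : Output H) :
  (forall u, fG u = conform_mx 0 (fH (phi u))) ->
  forall v, fwd_step wG x fG v = conform_mx 0 (fwd_step wH x fH (phi v)).
Proof.
move=> hf v; rewrite /fwd_step.
have e := lm_pi phi v.
have hI : (lp_pi H (phi v) \in pm_I B) = (lp_pi G v \in pm_I B) by rewrite e.
rewrite hI; case: ifP => hIv.
  rewrite (conf_conf (or_intror (f_equal (pm_dY B) (esym e)))).
  by rewrite (lm_c phi hIv).
apply: sigma_cast => // a.
have ez : pm_dZ B a (lp_pi H (phi v)) = pm_dZ B a (lp_pi G v) by rewrite e.
rewrite conf_sum.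
under [RHS]eq_bigr => u' _ do rewrite (conf_conf (or_intror ez)).
pose h' (u' : lp_V H) := odflt v [pick u | lp_E G u v && (phi u == u')].
rewrite (reindex_onto phi h'); last first.
  move=> u' /andP [eu' _]; have [u euv pu] := lm_fib_surj eu'.
  rewrite /h'; case: pickP => [u0 /andP [_ /eqP] //|/(_ u)].
  by rewrite euv pu eqxx.
apply: eq_big => [u|u /andP [euv _]].
  rewrite -(lm_pi phi u); case euv: (lp_E G u v).
    rewrite (lm_hom phi euv) /=.
    rewrite /h'; case: pickP => [u0 /andP [e0 /eqP p0]|/(_ u)].
      by rewrite (lm_fib_inj e0 euv p0) eqxx andbT.
    by rewrite euv eqxx.
  apply/esym/negbTE/negP => /andP [/andP [eH _] /eqP].
  rewrite /h'; case: pickP => [u0 /andP [e0 _] hu|none _].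
    by rewrite -hu e0 in euv.
  have [u1 e1 p1] := lm_fib_surj eH.
  by have := none u1; rewrite e1 p1 eqxx.
rewrite hw // hf; apply: M_cast; exact: lm_pi.
Qed.

Lemma iter_key k v :
  iter k (fwd_step wG x) (fun _ => 0) v =
  conform_mx 0 (iter k (fwd_step wH x) (fun _ => 0) (phi v)).
Proof.
elim: k v => [|k IH] v /=; first by rewrite conf0.
exact: step.
Qed.

End Main.
Arguments iter_key {R VB B C pC G H phi wG wH} hw {x k v}.
Arguments stab {R VB B C pC G w x k v}.
Arguments lp_acyclic {R VB B C pC}.
Arguments reach_lift {R VB B C pC G H phi k v}.
Arguments noreach {T E}.

Theorem proposition3 (R : realType) (VB : finType) (B : PMod R VB)
    (C : finType) (pC : C -> VB) (G H : LiftPMod B pC) (phi : LPMorph G H)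
    (wG : Param G) (wH : Param H) :
  (forall u v : lp_V G, lp_E G u v -> wG u v = conform_mx 0 (wH (phi u) (phi v))) ->
  forall (x : Input B pC) (v : lp_V G),
    forward wG x v = conform_mx 0 (forward wH x (phi v)).
Proof.
move=> hw x v; rewrite /forward (iter_key hw); congr conform_mx.
case: (leqP #|lp_V G| #|lp_V H|) => hle.
  apply: esym; apply: stab => // r.
  exact: (noreach (lp_acyclic G) v (reach_lift r)).
apply: stab; last exact: ltnW.
exact: (noreach (lp_acyclic H) (phi v)).
Qed.
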